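(* If $G$ is a finite directed acyclic graph, then the complex of directed trees $\mathrm{DT}(G)$ is shellable.
   Context: All graphs are finite and directed. A directed acyclic graph is a directed graph with no directed cycles. A directed forest is a set of edges which, viewed as a graph, is acyclic and has at most one edge directed to each vertex. The complex of directed trees $\mathrm{DT}(G)$ is the simplicial complex whose vertex set is the edge set $E(G)$, a set of edges being a simplex iff it is a directed forest. A simplicial complex $\Delta$ is shellable if its maximal faces can be ordered $F_1,\dots,F_n$ such that for all $1\le i<k\le n$ there exist $1\le j<k$ and $e\in F_k$ with $F_i\cap F_k\subseteq F_j\cap F_k=F_k\setminus\{e\}$. *)

(* Defs.v *)
From mathcomp Require Import all_boot.
Set Implicit Arguments. Unset Strict Implicit. Unset Printing Implicit Defensive.

(* A finite directed graph: a finite vertex type V and an edge relation e;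
   the edge set E(G) is the set of pairs (u,v) with e u v. *)

Definition edge_set (V : finType) (e : rel V) : {set V * V} :=
  [set p | e p.1 p.2].

(* A relation has no directed cycle (a loop counts as a cycle). *)
Definition acyclic_rel (V : finType) (r : rel V) : Prop :=
  forall x y, r x y -> ~~ connect r y x.

Definition dag (V : finType) (e : rel V) : Prop := acyclic_rel e.

Definition rel_of (V : finType) (F : {set V * V}) : rel V :=
  fun x y => (x, y) \in F.

Definition directed_forest (V : finType) (F : {set V * V}) : Prop :=
  acyclic_rel (rel_of F) /\ forall v : V, #|[set p in F | p.2 == v]| <= 1.

Definition DT_face (V : finType) (e : rel V) (F : {set V * V}) : Prop :=
  F \subset edge_set e /\ directed_forest F.

(* A simplicial complex on ground type T is given by its predicate of faces. *)
Definition facet (T : finType) (face : {set T} -> Prop) (F : {set T}) : Prop :=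
  face F /\ forall F', face F' -> F \subset F' -> F' = F.

Definition shellable (T : finType) (face : {set T} -> Prop) : Prop :=
  exists s : seq {set T},
    uniq s /\ (forall F, F \in s <-> facet face F) /\
    forall i k, i < k -> k < size s ->
      exists j, j < k /\ exists x,
        x \in nth set0 s k /\
        nth set0 s i :&: nth set0 s k \subset nth set0 s j :&: nth set0 s k /\
        nth set0 s j :&: nth set0 s k = nth set0 s k :\ x.

(* Main.v *)
Require Import Defs.
From mathcomp Require Import all_boot.
Set Implicit Arguments. Unset Strict Implicit. Unset Printing Implicit Defensive.

Definition uniqt (V : finType) (F : {set V * V}) :=
  forall p q, p \in F -> q \in F -> p.2 = q.2 -> p = q.
Definition facep (V : finType) (e : rel V) (F : {set V * V}) :=
  F \subset edge_set e /\ uniqt F.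
Definition covers (V : finType) (e : rel V) (F : {set V * V}) :=
  forall p, p \in edge_set e -> exists2 q, q \in F & q.2 = p.2.

Lemma face_iff (V : finType) (e : rel V) F : dag e -> DT_face e F <-> facep e F.
Proof.
move=> He; split.
  move=> [sF [_ Hc]]; split => // p q pF qF E12.
  have /card_le1_eqP H := Hc p.2.
  by apply: H; rewrite inE ?pF ?qF ?E12 /=.
move=> [sF Hu]; split => //; split.
  move=> x y rxy; apply/negP => cyx.
  have sub : subrel (rel_of F) e.
    by move=> a b; rewrite /rel_of => /(subsetP sF); rewrite inE.
  have H1 : subrel (rel_of F) (connect e) by move=> a b /sub ab; apply: connect1.
  by have := He _ _ (sub _ _ rxy); rewrite (connect_sub H1 cyx).
move=> v; apply/card_le1_eqP => p q; rewrite !inE => /andP[pF /eqP pv] /andP[qF /eqP qv].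
by apply: Hu; rewrite // pv qv.
Qed.

Lemma add_face (V : finType) (e : rel V) F p : facep e F -> p \in edge_set e ->
  (forall q, q \in F -> q.2 <> p.2) -> facep e (p |: F).
Proof.
move=> [sF Hu] pE Hn; split.
  apply/subsetP => q; rewrite in_setU1 => /orP[/eqP->//|qF].
  exact: (subsetP sF).
move=> a b; rewrite !inE => /orP[/eqP->|aF] /orP[/eqP->|bF] //.
- by move=> E; have := Hn _ bF; rewrite E.
- by move=> E; have := Hn _ aF; rewrite E.
- exact: Hu.
Qed.

Lemma facet_iff (V : finType) (e : rel V) F : dag e ->
  facet (DT_face e) F <-> facep e F /\ covers e F.
Proof.
move=> He; split.
  move=> [/(face_iff _ He) Hf Hm]; split => // p pE.
  case: (boolP [exists q in F, q.2 == p.2]).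
    by move=> /existsP[q /andP[qF /eqP]]; exists q.
  move=> /existsPn Hn.
  have Hf' : facep e (p |: F).
    apply: add_face => // q qF E; have := Hn q; rewrite qF E eqxx //.
  have := Hm _ ((face_iff _ He).2 Hf') (subsetUr _ _) => EF.
  exists p => //; rewrite -EF; exact: setU11.
move=> [Hf Hc]; split; first exact/(face_iff _ He).
move=> F' /(face_iff _ He) [sF' Hu'] sFF'; apply/eqP; rewrite eqEsubset sFF' andbT.
apply/subsetP => q qF'; have [r rF rq] := Hc q (subsetP sF' _ qF').
by rewrite (Hu' q r) // (subsetP sFF').
Qed.

Definition faceb (V : finType) (e : rel V) (F : {set V * V}) :=
  (F \subset edge_set e) && [forall p in F, forall q in F, (p.2 == q.2) ==> (p == q)].
Definition facetb (V : finType) (e : rel V) (F : {set V * V}) :=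
  faceb e F && [forall p in edge_set e, exists q in F, q.2 == p.2].

Lemma facebP (V : finType) (e : rel V) F : reflect (facep e F) (faceb e F).
Proof.
apply: (iffP andP) => [[sF /forallP H]|[sF Hu]]; split => //.
  move=> p q pF qF E; have := H p; rewrite pF /= => /forallP /(_ q).
  by rewrite qF E eqxx /= => /eqP.
apply/forallP => p; apply/implyP => pF; apply/forallP => q; apply/implyP => qF.
by apply/implyP => /eqP E; rewrite (Hu p q).
Qed.

Lemma facetbP (V : finType) (e : rel V) F : reflect (facep e F /\ covers e F) (facetb e F).
Proof.
apply: (iffP andP) => [[/facebP Hf /forallP H]|[Hf Hc]]; split => //.
  move=> p pE; have := H p; rewrite pE /= => /existsP[q /andP[qF /eqP E]].
  by exists q.
  exact/facebP.
apply/forallP => p; apply/implyP => pE; have [q qF E] := Hc p pE.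
by apply/existsP; exists q; rewrite qF E eqxx.
Qed.

Lemma exists_facet (V : finType) (e : rel V) : exists D, facep e D /\ covers e D.
Proof.
have f0 : faceb e set0 by apply/facebP; split; [exact: sub0set| by move=> p q; rewrite inE].
case: (@arg_maxnP _ set0 (faceb e) (fun F => #|F|) f0) => D /facebP HD Hmax.
exists D; split => // p pE.
case: (boolP [exists q in D, q.2 == p.2]).
  by move=> /existsP[q /andP[qF /eqP]]; exists q.
move=> /existsPn Hn.
have Hf' : facep e (p |: D).
  apply: add_face => // q qF E; have := Hn q; rewrite qF E eqxx //.
have := Hmax _ (introT (facebP _ _) Hf').
rewrite cardsU1.
case: (boolP (p \in D)) => [pD|]; last by rewrite /= ltnn.
by have := Hn p; rewrite pD eqxx.
Qed.

Lemma exchange (V : finType) (e : rel V) D Fi Fk :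
  facep e D -> covers e D -> facep e Fi -> covers e Fi -> facep e Fk -> covers e Fk ->
  Fi != Fk -> #|Fi :\: D| <= #|Fk :\: D| ->
  exists x, exists Fj, [/\ facep e Fj /\ covers e Fj, x \in Fk,
    #|Fj :\: D| < #|Fk :\: D|, Fi :&: Fk \subset Fj :&: Fk & Fj :&: Fk = Fk :\ x].
Proof.
move=> [sD uD] cD [sFi uFi] cFi [sFk uFk] cFk neq mle.
have [x /setDP[xFk xD] xFi] : exists2 x, x \in Fk :\: D & x \notin Fi.
  case: (boolP [exists x in Fk :\: D, x \notin Fi]) => [/exists_inP//|/exists_inPn Hall].
  exfalso.
  have sub : Fk :\: D \subset Fi :\: D.
    apply/subsetP => q qkD; have := Hall q qkD; rewrite negbK => qFi.
    by move: qkD; rewrite !inE qFi andbT => /andP[].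
  have Eq : Fk :\: D = Fi :\: D by apply/eqP; rewrite eqEcard sub mle.
  move/negP: neq; apply; rewrite eq_sym eqEsubset; apply/andP; split; last first.
    apply/subsetP => q qFi; have [r rFk rq] := cFk q (subsetP sFi _ qFi).
    case: (boolP (r \in D)) => rD.
      case: (boolP (q \in D)) => qD; first by rewrite (uD q r).
      have : q \in Fk :\: D by rewrite Eq inE qD.
      by rewrite inE => /andP[].
    have : r \in Fi :\: D by rewrite -Eq inE rD.
    by rewrite inE => /andP[_ rFi]; rewrite (uFi q r).
  apply/subsetP => q qFk; have [r rFi rq] := cFi q (subsetP sFk _ qFk).
  case: (boolP (q \in D)) => qD.
    case: (boolP (r \in D)) => rD; first by rewrite (uD q r).
    have : r \in Fk :\: D by rewrite Eq inE rD.
    by rewrite inE => /andP[_ rFk]; rewrite (uFk q r).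
  have : q \in Fi :\: D by rewrite -Eq inE qD.
  by rewrite inE => /andP[].
have xE := subsetP sFk _ xFk.
have [d dD dx] := cD x xE.
have dFk : d \notin Fk.
  apply/negP => dFk; have dxe := uFk d x dFk xFk dx; by rewrite -dxe dD in xD.
have dnx : d != x by apply/negP => /eqP dxe; rewrite -dxe dD in xD.
exists x, (d |: (Fk :\ x)); split => //.
- split.
  + split.
      apply/subsetP => q; rewrite in_setU1 => /orP[/eqP->|]; first exact: (subsetP sD).
      by rewrite inE => /andP[_ /(subsetP sFk)].
    move=> p q; rewrite !in_setU1 !inE.
    move=> /orP[/eqP->|/andP[px pF]] /orP[/eqP->|/andP[qx qF]] //.
    * move=> E; exfalso; move/negP: qx; apply; apply/eqP; apply: uFk => //; by rewrite -E dx.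
    * move=> E; exfalso; move/negP: px; apply; apply/eqP; apply: uFk => //; by rewrite E dx.
    * exact: uFk.
  + move=> p pE; have [q qF qp] := cFk p pE.
    case: (boolP (q == x)) => [/eqP qx|qx].
      by exists d; rewrite ?setU11 // dx -qx.
    by exists q => //; rewrite !inE qx qF orbT.
- have -> : (d |: (Fk :\ x)) :\: D = (Fk :\: D) :\ x.
    apply/setP => q; rewrite !inE.
    case: (boolP (q == d)) => [/eqP->|]; first by rewrite dD !andbF.
    by rewrite /=; case: (q \in D); rewrite ?andbF.
  by rewrite [#|Fk :\: D|](cardsD1 x) inE xFk xD.
- have -> : (d |: (Fk :\ x)) :&: Fk = Fk :\ x.
    apply/setP => q; rewrite !inE.
    case: eqP => [->|_] /=; first by rewrite (negbTE dFk) !andbF.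
    by case: (q != x); case: (q \in Fk).
  apply/subsetP => q; rewrite !inE => /andP[qFi ->]; rewrite andbT.
  by apply/eqP => qx; rewrite -qx qFi in xFi.
- apply/setP => q; rewrite !inE.
  case: eqP => [->|_] /=; first by rewrite (negbTE dFk) !andbF.
  by case: (q != x); case: (q \in Fk).
Qed.

Theorem corollary2p10 (V : finType) (e : rel V) :
  dag e -> shellable (DT_face e).
Proof.
move=> He.
have [D [HD cD]] := exists_facet e.
pose m (F : {set V * V}) := #|F :\: D|.
pose r := fun A B : {set V * V} => m A <= m B.
have rtot : total r by move=> A B; apply: leq_total.
have rtr : transitive r by move=> A B C; apply: leq_trans.
pose s := sort r (enum (facetb e)).
have memS F : F \in s <-> facet (DT_face e) F.
  rewrite mem_sort mem_enum; split; first by move/facetbP/(facet_iff _ He).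
  by move/(facet_iff _ He)/facetbP.
exists s; split; first by rewrite sort_uniq enum_uniq.
split => // i k ik ks.
have ssort : sorted r s by apply: sort_sorted.
have iS : i < size s by apply: ltn_trans ks.
have Fi_in : nth set0 s i \in s by apply: mem_nth.
have Fk_in : nth set0 s k \in s by apply: mem_nth.
have /(facet_iff _ He) [Hi ci] := (memS _).1 Fi_in.
have /(facet_iff _ He) [Hk ck] := (memS _).1 Fk_in.
have neq : nth set0 s i != nth set0 s k.
  by rewrite nth_uniq ?sort_uniq ?enum_uniq // neq_ltn ik.
have mle : m (nth set0 s i) <= m (nth set0 s k).
  exact: (sorted_leq_nth rtr (fun A => leqnn (m A)) set0 ssort) (ltnW ik).
have [x [Fj [[Hj cj] xk mlt sub Eq]]] := exchange HD cD Hi ci Hk ck neq mle.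
have Fj_in : Fj \in s by apply/memS/(facet_iff _ He).
exists (index Fj s); split.
  rewrite ltnNge; apply/negP => kj.
  have := sorted_leq_nth rtr (fun A => leqnn (m A)) set0 ssort.
  move=> /(_ k (index Fj s)); rewrite !inE ks index_mem Fj_in nth_index //.
  by move=> /(_ isT isT kj); rewrite /r leqNgt mlt.
exists x; rewrite nth_index //.
Qed.
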